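(* Fix $d\ge1$, $p\in[0,1]$ and $k\in\{0,\dots,2d\}$ with $k\ge 1+2dp$. Then for any two disjoint nonempty sets $A,B\subseteq\mathcal N_o$, $$\mathbf P_p[N(o)\cap A\neq\emptyset\text{ and }N(o)\cap B\neq\emptyset]\le \mathbf Q_{k/(2d)}[N(o)\cap A\neq\emptyset\text{ and }N(o)\cap B\neq\emptyset].$$
   Context: $\mathcal N_o=\{v\in\mathbb Z^d:\|v\|_1=1\}$; $N(o)$ is a random subset of $\mathcal N_o$. Under $\mathbf P_p$ each element of $\mathcal N_o$ is included independently with probability $p$. Under $\mathbf Q_{k/(2d)}$, $N(o)$ is a uniformly random $k$-element subset of $\mathcal N_o$. *)

(* Defs.v *)
From mathcomp Require Import all_boot all_order all_algebra.
Set Implicit Arguments. Unset Strict Implicit. Unset Printing Implicit Defensive.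
Import Order.TTheory GRing.Theory Num.Theory.
Local Open Scope ring_scope.

(* The neighbourhood N_o = {v in Z^d : ||v||_1 = 1} = {+e_i, -e_i : i < d},
   labelled by (i, s) : 'I_d * bool, where (i, true) <-> +e_i, (i, false) <-> -e_i. *)
Definition Nbr (d : nat) : finType := ('I_d * bool)%type.

Definition nbr_vec (d : nat) (v : Nbr d) : 'I_d -> int :=
  fun j => if j == v.1 then (if v.2 then 1 else -1) else 0.

Definition Pp (R : nzRingType) (d : nat) (p : R) (E : pred {set Nbr d}) : R :=
  \sum_(S : {set Nbr d} | E S) p ^+ #|S| * (1 - p) ^+ (#|[set: Nbr d]| - #|S|).

Definition Qk (R : fieldType) (d k : nat) (E : pred {set Nbr d}) : R :=
  #|[set S : {set Nbr d} | (#|S| == k) && E S]|%:R / ('C(2 * d, k))%:R.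

Definition hits_both (d : nat) (A B : {set Nbr d}) : pred {set Nbr d} :=
  fun N => (N :&: A != set0) && (N :&: B != set0).

(* Main.v *)
Require Import Defs.
From mathcomp Require Import all_boot all_order all_algebra.
From mathcomp Require Import zify ring lra.
Import Order.TTheory GRing.Theory Num.Theory.
Local Open Scope ring_scope.

Lemma sum_sizes (R : comNzRingType) (T : finType) (C : {set T}) (F : nat -> R) :
  \sum_(S : {set T} | S :&: C == set0) F #|S| =
  \sum_(j < #|T|.+1) F j *+ 'C(#|~: C|, j).
Proof.
rewrite (partition_big (fun S : {set T} => (inord #|S| : 'I_(#|T|).+1)) predT) //=.
apply: eq_bigr => j _.
have -> : \sum_(S | (S :&: C == set0) && (inord #|S| == j)) F #|S| =
   \sum_(S in [set S : {set T} | S \subset ~: C & #|S| == j]) F j.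
  apply: eq_big => S; last first.
    move=> /andP[_ /eqP <-]; rewrite inordK //; rewrite ltnS; exact: max_card.
  rewrite inE setI_eq0 disjoints_subset; congr (_ && _).
  by rewrite -(inj_eq val_inj) /= inordK // ltnS; exact: max_card.
by rewrite sumr_const cards_draws.
Qed.

Lemma sum_miss (R : comNzRingType) (T : finType) (C : {set T}) (p : R) :
  \sum_(S : {set T} | S :&: C == set0) p ^+ #|S| * (1 - p) ^+ (#|[set: T]| - #|S|)
  = (1 - p) ^+ #|C|.
Proof.
rewrite cardsT (@sum_sizes R T C (fun j => p ^+ j * (1 - p) ^+ (#|T| - j))).
set m := #|~: C|.
have hn : #|T| = (#|C| + m)%N by rewrite /m cardsC.
have : (1 - p) ^+ #|C| = (1 - p) ^+ #|C| * ((1 - p) + p) ^+ m.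
  by rewrite subrK expr1n mulr1.
move=> ->; rewrite [(1 - p + p) ^+ m]exprDn.
rewrite big_distrr /=.
rewrite -(big_mkord predT (fun j => p ^+ j * (1 - p) ^+ (#|T| - j) *+ 'C(m, j))).
rewrite -(big_mkord predT (fun i => (1 - p) ^+ #|C| * ((1 - p) ^+ (m - i) * p ^+ i *+ 'C(m, i)))).
rewrite (big_cat_nat (n := m.+1)) //=; last by rewrite ltnS hn leq_addl.
rewrite [X in _ + X]big_nat_cond [X in _ + X]big1 ?addr0; last first.
  move=> i /andP[/andP[hi _] _]; rewrite bin_small ?mulr0n //.
apply: eq_big_nat => i /andP[_ hi].
rewrite mulrnAr; congr (_ *+ _).
rewrite mulrA -exprD mulrC; congr (_ * _ ^+ _).
rewrite hn; congr (_ ^+ _); lia.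
Qed.
Lemma IE (R : comNzRingType) (T : finType) (A B : {set T}) (g : {set T} -> R) :
  \sum_(S | (S :&: A != set0) && (S :&: B != set0)) g S =
  \sum_S g S - \sum_(S | S :&: A == set0) g S - \sum_(S | S :&: B == set0) g S
  + \sum_(S | S :&: (A :|: B) == set0) g S.
Proof.
have e1 : \sum_S g S = \sum_(S | S :&: A == set0) g S
     + \sum_(S | S :&: A != set0) g S.
  by rewrite (bigID (fun S => S :&: A == set0)).
have e2 : \sum_(S | S :&: A != set0) g S =
   \sum_(S | (S :&: A != set0) && (S :&: B == set0)) g S
   + \sum_(S | (S :&: A != set0) && (S :&: B != set0)) g S.
  by rewrite (bigID (fun S => S :&: B == set0)).
have e3 : \sum_(S | S :&: B == set0) g S =
   \sum_(S | (S :&: B == set0) && (S :&: A == set0)) g S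
   + \sum_(S | (S :&: B == set0) && (S :&: A != set0)) g S.
  by rewrite (bigID (fun S => S :&: A == set0)).
have e4 : \sum_(S | S :&: (A :|: B) == set0) g S =
   \sum_(S | (S :&: B == set0) && (S :&: A == set0)) g S.
  by apply: eq_bigl => S; rewrite setIUr setU_eq0 andbC.
have e5 : \sum_(S | (S :&: B == set0) && (S :&: A != set0)) g S =
   \sum_(S | (S :&: A != set0) && (S :&: B == set0)) g S.
  by apply: eq_bigl => S; rewrite andbC.
rewrite e1 e2 e3 e4 e5.




ring.
Qed.
Lemma binF (R : pzRingType) (N k : nat) :
  N%:R * ('C(N.-1, k))%:R = (N%:R - k%:R) * ('C(N, k))%:R :> R.
Proof.
case: (leqP k N) => h.
  by rewrite -natrM mul_bin_down natrM natrB.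
rewrite !bin_small ?mulr0 //; lia.
Qed.

Lemma algI (R : realFieldType) (n k N q cN cN1 : R) :
  1 <= k -> 1 <= N -> N <= n -> 0 <= cN -> 0 <= q -> n - k + 1 <= n * q ->
  N * cN1 = (N - k) * cN -> cN1 <= q * cN.
Proof.
move=> hk hN hNn hc hq hnq hF.
have h1 : 0 <= N * q - N + k.
  have h0 : 0 <= n * (N * q - N + k) by nra.
  by rewrite pmulr_rge0 in h0; lra.
have h3 : N * (q * cN - cN1) = cN * (N * q - N + k).
  by rewrite mulrBr hF; ring.
have h4 : 0 <= N * (q * cN - cN1) by rewrite h3; apply: mulr_ge0.
rewrite pmulr_rge0 in h4; [lra | lra].
Qed.

Lemma algII (R : realFieldType) (n k N M a q cN cN1 cM cM1 : R) :
  N = M + a -> N * cN1 = (N - k) * cN -> M * cM1 = (M - k) * cM ->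
  cM * (M + k * a) <= M * cN -> 1 <= M -> 1 <= k -> N <= n ->
  n - k + 1 <= n * q -> cM <= cN -> 0 <= a -> 0 <= q ->
  cN1 - cM1 <= q * (cN - cM).
Proof.
move=> HN HF1 HF2 H3 hM hk hNn hnq hc ha hq.
have e : M * (N * (cN1 - cM1)) = M * (N * cN1) - N * (M * cM1) by ring.
have h1 : M * (N * (cN1 - cM1)) = M * ((N - k + 1) * (cN - cM)) + (cM * (M + k * a) - M * cN).
  by rewrite e HF1 HF2 HN; ring.
have h2 : N * (cN1 - cM1) <= (N - k + 1) * (cN - cM).
  have : M * (N * (cN1 - cM1)) <= M * ((N - k + 1) * (cN - cM)) by lra.
  by rewrite ler_pM2l; lra.
have h3 : 0 <= N * q - (N - k + 1).
  have h0 : 0 <= n * (N * q - (N - k + 1)) by nra.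
  by rewrite pmulr_rge0 in h0; lra.
have h4 : (N - k + 1) * (cN - cM) <= N * (q * (cN - cM)) by nra.
have h5 : N * (cN1 - cM1) <= N * (q * (cN - cM)) by lra.
by rewrite ler_pM2l in h5; lra.
Qed.

Lemma L1 (M a j : nat) : ('C(M, j.+1) + a * 'C(M, j) <= 'C(M + a, j.+1))%N.
Proof.
elim: a => [|a IH]; first by rewrite mul0n addn0 addn0.
rewrite addnS binS mulSn.
have := leq_bin2l j (leq_addr a M); lia.
Qed.

Lemma L2 (M j : nat) : (j.+1 * 'C(M, j.+1) <= M * 'C(M, j))%N.
Proof. by rewrite -mul_bin_diag leq_mul2l leq_bin2l ?leq_pred ?orbT. Qed.

Lemma L3 (M a k : nat) : (1 <= k)%N -> ('C(M, k) * (M + k * a) <= M * 'C(M + a, k))%N.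
Proof.
case: k => // j _.
have h3 : (M * ('C(M, j.+1) + a * 'C(M, j)) <= M * 'C(M + a, j.+1))%N :=
  leq_mul (leqnn M) (L1 M a j).
have h4 : (a * (j.+1 * 'C(M, j.+1)) <= a * (M * 'C(M, j)))%N :=
  leq_mul (leqnn a) (L2 M j).
nia.
Qed.

Lemma boundI (R : realFieldType) (n k : nat) (q : R) (a : nat) :
  (1 <= k)%N -> 0 <= q -> n%:R - k%:R + 1 <= n%:R * q -> (a <= n)%N ->
  ('C(n - a, k))%:R <= q ^+ a * ('C(n, k))%:R.
Proof.
move=> hk hq hnq.
elim: a => [|a IH] ha; first by rewrite subn0 expr0 mul1r.
have hs : ('C((n - a).-1, k))%:R <= q * ('C(n - a, k))%:R :> R.
  apply: (@algI R n%:R k%:R (n - a)%:R) => //.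
  all: try exact: binF.
  all: try (rewrite ?ler1n ?ler_nat ?ler0n; lia).
rewrite subnS exprS -mulrA.
apply: (le_trans hs); apply: ler_wpM2l => //; apply: IH; lia.
Qed.

Lemma boundII (R : realFieldType) (n k : nat) (q : R) (a b : nat) :
  (1 <= k)%N -> 0 <= q -> n%:R - k%:R + 1 <= n%:R * q -> (b <= n - a)%N ->
  ('C(n - b, k))%:R - ('C(n - b - a, k))%:R
    <= q ^+ b * (('C(n, k))%:R - ('C(n - a, k))%:R) :> R.
Proof.
move=> hk hq hnq.
elim: b => [|b IH] hb; first by rewrite !subn0 expr0 mul1r.
have hs : ('C((n - b).-1, k))%:R - ('C((n - b - a).-1, k))%:R
     <= q * (('C(n - b, k))%:R - ('C(n - b - a, k))%:R) :> R.
  have eN : (n - b = (n - b - a) + a)%N by lia.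
  apply: (@algII R n%:R k%:R (n - b)%:R (n - b - a)%:R a%:R) => //.
  - by rewrite -natrD -eN.
  - exact: binF.
  - exact: binF.
  - by rewrite -natrM -natrD -natrM -natrM ler_nat; have := L3 (n - b - a) a k hk; rewrite -eN.
  all: try (rewrite ?ler1n ?ler_nat ?ler0n; lia).
  by rewrite ler_nat leq_bin2l // leq_subr.
have e1 : (n - b.+1 = (n - b).-1)%N by lia.
have e2 : (n - b.+1 - a = (n - b - a).-1)%N by lia.
rewrite e2 e1 exprS -mulrA.
apply: (le_trans hs); apply: ler_wpM2l => //; apply: IH; lia.
Qed.

Lemma count_miss (R : comNzRingType) (T : finType) (C : {set T}) (k : nat) :
  (k <= #|T|)%N ->
  \sum_(S : {set T} | S :&: C == set0) ((#|S| == k) : nat)%:R = ('C(#|T| - #|C|, k))%:R :> R.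
Proof.
move=> hk.
rewrite (@sum_sizes R T C (fun j => ((j == k) : nat)%:R)).
have hk1 : (k < #|T|.+1)%N by rewrite ltnS.
rewrite (bigD1 (Ordinal hk1)) //=.
rewrite eqxx big1 ?addr0; last first.
  move=> j hj; have -> : (nat_of_ord j == k) = false.
    by apply/negbTE; apply: contra hj => /eqP e; apply/eqP/val_inj.
  by rewrite mul0rn.
have -> : (#|~: C| = #|T| - #|C|)%N by have := cardsC C; lia.
by rewrite mulr1n.
Qed.

Theorem lemma3p9 (R : realFieldType) (d : nat) (p : R) (k : nat)
  (A B : {set Nbr d}) :
  (1 <= d)%N -> 0 <= p -> p <= 1 -> (k <= 2 * d)%N ->
  1 + (2 * d)%:R * p <= k%:R ->
  [disjoint A & B] -> A != set0 -> B != set0 ->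
  Pp p (hits_both A B) <= Qk R k (hits_both A B).
Proof.
move=> hd hp0 hp1 hkn hkp hAB hA hB.
have hn : #|Nbr d| = (2 * d)%N by rewrite card_prod card_ord card_bool mulnC.
set n := (2 * d)%N in hn hkn hkp *.
have hUAB : #|A :|: B| = (#|A| + #|B|)%N.
  by rewrite cardsU; move: hAB; rewrite -setI_eq0 => /eqP ->; rewrite cards0 subn0.
have hab : (#|A| + #|B| <= n)%N by rewrite -hUAB -hn max_card.
have ha : (0 < #|A|)%N by rewrite card_gt0.
have hb : (0 < #|B|)%N by rewrite card_gt0.
have hk : (1 <= k)%N.
  have : (1 : R) <= k%:R.
    have : 0 <= n%:R * p by apply: mulr_ge0.
    lra.
  by rewrite ler1n.
have hP : Pp p (hits_both A B) =
    1 - (1 - p) ^+ #|A| - (1 - p) ^+ #|B| + (1 - p) ^+ (#|A| + #|B|).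
  rewrite /Pp /hits_both.
  rewrite (@IE R (Nbr d) A B (fun S => p ^+ #|S| * (1 - p) ^+ (#|[set: Nbr d]| - #|S|))).
  rewrite !sum_miss hUAB.
  have -> : \sum_(S : {set Nbr d}) p ^+ #|S| * (1 - p) ^+ (#|[set: Nbr d]| - #|S|)
     = \sum_(S : {set Nbr d} | S :&: set0 == set0) p ^+ #|S| * (1 - p) ^+ (#|[set: Nbr d]| - #|S|).
    by apply: eq_bigl => S; rewrite setI0 eqxx.
  by rewrite sum_miss cards0 expr0.
have hQ : Qk R k (hits_both A B) =
    (('C(n, k))%:R - ('C(n - #|A|, k))%:R - ('C(n - #|B|, k))%:R
      + ('C(n - (#|A| + #|B|), k))%:R) / ('C(n, k))%:R.
  rewrite /Qk; congr (_ / _).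
  have -> : #|[set S : {set Nbr d} | (#|S| == k) && hits_both A B S]|%:R
      = \sum_(S : {set Nbr d} | (S :&: A != set0) && (S :&: B != set0))
           ((#|S| == k) : nat)%:R :> R.
    rewrite -sum1dep_card natr_sum.
    rewrite (eq_bigl (fun S : {set Nbr d} => ((S :&: A != set0) && (S :&: B != set0)) && (#|S| == k))); last first.
      by move=> S; rewrite andbC.
    rewrite big_mkcondr /=; apply: eq_bigr => S _.
    by case: (#|S| == k).
  rewrite (@IE R (Nbr d) A B (fun S => ((#|S| == k) : nat)%:R)).
  have hkT : (k <= #|Nbr d|)%N by rewrite hn.
  rewrite !count_miss // hUAB hn.
  have -> : \sum_(S : {set Nbr d}) ((#|S| == k) : nat)%:R
     = \sum_(S : {set Nbr d} | S :&: set0 == set0) ((#|S| == k) : nat)%:R :> R.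
    by apply: eq_bigl => S; rewrite setI0 eqxx.
  by rewrite count_miss // cards0 hn subn0.
rewrite hP hQ.
set q := 1 - p.
have hq0 : 0 <= q by rewrite /q; lra.
have hq1 : q <= 1 by rewrite /q; lra.
have hnq : n%:R - k%:R + 1 <= n%:R * q by rewrite /q; lra.
have hC : 0 < ('C(n, k))%:R :> R by rewrite ltr0n bin_gt0.
rewrite ler_pdivlMr //.
have hI := @boundI R n k q #|A| hk hq0 hnq (leq_trans (leq_addr _ _) hab).
have hII := @boundII R n k q #|A| #|B| hk hq0 hnq ltac:(lia).
have e : (n - (#|A| + #|B|) = n - #|B| - #|A|)%N by lia.
rewrite e exprD.
have hqa : 0 <= q ^+ #|A| by apply: exprn_ge0.
have hqb0 : 0 <= q ^+ #|B| by apply: exprn_ge0.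
have hqb1 : q ^+ #|B| <= 1 by apply: exprn_ile1.
move: hI hII hqa hqb0 hqb1.
set qa := q ^+ #|A|; set qb := q ^+ #|B|.
set C0 := ('C(n, k))%:R; set Ca := ('C(n - #|A|, k))%:R.
set Cb := ('C(n - #|B|, k))%:R; set Cab := ('C(n - #|B| - #|A|, k))%:R.
move=> hI hII hqa hqb0 hqb1.
have h1 : 0 <= (1 - qb) * (qa * C0 - Ca) by apply: mulr_ge0; lra.
have h2 : qb * (C0 - Ca) = qb * C0 - qb * Ca by ring.
have h3 : (1 - qa - qb + qa * qb) * C0 = C0 - qa * C0 - qb * C0 + qb * (qa * C0) by ring.
have h4 : (1 - qb) * (qa * C0 - Ca) = qa * C0 - Ca - qb * (qa * C0) + qb * Ca by ring.
rewrite h3; rewrite h2 in hII; rewrite h4 in h1.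
lra.
Qed.
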